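(* Let $G$ be a connected $k$-regular graph on $n\ge 2$ vertices. Then $h_G<\sqrt{n-1}\,\gamma(G)$, where $h_G$ is the Cheeger constant of $G$.
   Context: For a finite simple undirected graph $G$ with $n$ vertices, let $\mathcal{F}=\{x\in\mathbb{R}^{V(G)} : \sum_{v} x_v = 0,\ \|x\|_\infty = 1\}$, for $x\in\mathcal{F}$ let $\gamma_x(G)=\max_{uv\in E(G)}|x_u-x_v|$, and $\gamma(G)=\min_{x\in\mathcal{F}}\gamma_x(G)$. For $S\subseteq V(G)$, $\operatorname{vol}(S)=\sum_{u\in S}\deg(u)$; for nonempty proper $S\subsetneq V(G)$, $\partial S$ is the set of edges with exactly one endpoint in $S$, $h_G(S)=|\partial S|/\min(\operatorname{vol}(S),\operatorname{vol}(V(G)\setminus S))$, and $h_G=\min_S h_G(S)$ over nonempty proper subsets $S$. *)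

(* Defs.v *)
From HB Require Import structures.
From mathcomp Require Import all_boot all_order all_algebra.
From mathcomp Require Import all_classical all_reals.
Set Implicit Arguments. Unset Strict Implicit. Unset Printing Implicit Defensive.
Import Order.TTheory GRing.Theory Num.Theory.
Local Open Scope ring_scope.

Definition simple_graph (T : finType) (e : rel T) : Prop :=
  symmetric e /\ irreflexive e.

Definition connected_graph (T : finType) (e : rel T) : Prop :=
  forall x y : T, connect e x y.

Definition deg (T : finType) (e : rel T) (u : T) : nat := #|[set v | e u v]|.

Definition regular (T : finType) (e : rel T) (k : nat) : Prop :=
  forall u : T, deg e u = k.

Definition vol (T : finType) (e : rel T) (S : {set T}) : nat :=
  (\sum_(u in S) deg e u)%N.

(* |∂S|: each edge with exactly one endpoint in S is counted once, oriented
   from its endpoint in S to its endpoint outside S. *)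
Definition boundary_size (T : finType) (e : rel T) (S : {set T}) : nat :=
  #|[set p : T * T | [&& e p.1 p.2, p.1 \in S & p.2 \notin S]]|.

Definition hS (R : realType) (T : finType) (e : rel T) (S : {set T}) : R :=
  (boundary_size e S)%:R / (minn (vol e S) (vol e (~: S)))%:R.

(* Cheeger constant: minimum over nonempty proper subsets (a finite nonempty
   family, so inf = min). *)
Definition cheeger (R : realType) (T : finType) (e : rel T) : R :=
  inf [set hS R e S | S in [set S : {set T} | S != finset.set0 /\ S != finset.setT]]%classic.

Definition sup_norm (R : realType) (T : finType) (x : T -> R) : R :=
  \big[Num.max/0]_(v : T) `|x v|.

Definition feasible (R : realType) (T : finType) : set (T -> R) :=
  [set x | \sum_(v : T) x v = 0 /\ sup_norm x = 1]%classic.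

(* gamma_x(G) = max over edges uv of |x_u - x_v| (all quantities >= 0, so
   0 is a harmless default for the max). *)
Definition gamma_x (R : realType) (T : finType) (e : rel T) (x : T -> R) : R :=
  \big[Num.max/0]_(p : T * T | e p.1 p.2) `|x p.1 - x p.2|.

(* gamma(G) = min over x in F of gamma_x(G); the minimum is attained
   (F is compact, gamma_x continuous), so it equals the infimum. *)
Definition gamma (R : realType) (T : finType) (e : rel T) : R :=
  inf [set gamma_x e x | x in @feasible R T]%classic.

(* Main.v *)
Require Import Defs.
From HB Require Import structures.
From mathcomp Require Import all_boot all_order all_algebra.
From mathcomp Require Import all_classical all_reals.
From mathcomp Require Import ring lra zify.
Import Order.TTheory GRing.Theory Num.Theory.
Local Open Scope ring_scope.

Section Aux.
Variables (R : realType) (T : finType) (e : rel T).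
Hypothesis esym : symmetric e.

Lemma sum_edge_fst (F : T -> R) :
  \sum_(p | e p.1 p.2) F p.1 = \sum_u (deg e u)%:R * F u.
Proof.
rewrite -(pair_big_dep xpredT (fun u v => e u v) (fun u v => F u)) /=.
apply: eq_bigr => u _; rewrite sumr_const /deg cardsE.
by rewrite mulr_natl.
Qed.

Lemma sum_edge_swap (G : T * T -> R) :
  \sum_(p | e p.1 p.2) G p = \sum_(p | e p.1 p.2) G (p.2, p.1).
Proof.
rewrite (reindex_inj (h := fun p : T * T => (p.2, p.1))) /=; last first.
  by move=> [a b] [c d] /= [-> ->].
apply: eq_bigl => p /=; by rewrite esym.
Qed.

Lemma sum_edge_card (S : {set T}) :
  \sum_(p | e p.1 p.2) ((p.1 \in S) && (p.2 \notin S))%:R = (boundary_size e S)%:R :> R.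
Proof.
rewrite /boundary_size -sum1_card natr_sum.
rewrite [RHS]big_mkcond [LHS]big_mkcond /=; apply: eq_bigr => p _.
rewrite inE; by case: (e p.1 p.2); case: (p.1 \in S); case: (p.2 \in S).
Qed.

End Aux.

Section Co.
Variables (R : realType) (T : finType) (e : rel T) (k : nat) (h : R).
Hypothesis esym : symmetric e.
Hypothesis Hcut : forall S : {set T}, (2 * #|S| <= #|T|)%N ->
  h * (k * #|S|)%:R <= (boundary_size e S)%:R.

Definition supp (f : T -> R) := [set v | 0 < f v].
Lemma coarea m (f : T -> R) : (#|supp f| <= m)%N ->
  (forall v, 0 <= f v) -> (2 * #|supp f| <= #|T|)%N ->
  2 * h * k%:R * \sum_v f v <= \sum_(p | e p.1 p.2) `|f p.1 - f p.2|.
Proof.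
elim: m f => [|m IH] f Hm f0 Hn; rewrite /supp in Hm Hn.
  have fz : forall v, f v = 0.
    move=> v; apply/eqP; rewrite eq_le f0 andbT leNgt; apply/negP => fv.
    move: Hm; rewrite leqn0 cards_eq0 => /eqP/setP/(_ v); by rewrite !inE fv.
  rewrite big1 ?mulr0; last by move=> v _; rewrite fz.
  by apply: sumr_ge0 => p _.
rewrite /supp in Hm Hn.
set S := [set v | 0 < f v] in Hm Hn *.
case: (set_0Vmem S) => [S0|[v0 v0S]].
  have fz : forall v, f v = 0.
    move=> v; apply/eqP; rewrite eq_le f0 andbT leNgt; apply/negP => fv.
    by move/setP: S0 => /(_ v); rewrite !inE fv.
  rewrite big1 ?mulr0; last by move=> v _; rewrite fz.
  by apply: sumr_ge0 => p _.
case: (@arg_minP _ _ T v0 (mem S) f v0S) => vm vmS vmmin.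
set t := f vm.
have {}vmS : vm \in S by []. have {}vmmin : forall j, j \in S -> f vm <= f j by [].
have t0 : 0 < t by move: vmS; rewrite /S inE.
have fS : forall v, (v \in S) = (0 < f v) by move=> v; rewrite /S inE.
pose g v := if 0 < f v then f v - t else 0.
have g0 : forall v, 0 <= g v.
  move=> v; rewrite /g; case: ifP => // fv; rewrite subr_ge0; apply: vmmin.
  by rewrite fS.
have suppg : supp g \subset S :\ vm.
  rewrite /supp; apply/fintype.subsetP => v; rewrite !inE /g; case: ifP => fv; last by rewrite ltxx.
  rewrite subr_gt0 andbT => ltv; apply/eqP => vv; move: ltv; by rewrite vv /t ltxx.
have cardg : (#|supp g| < #|S|)%N.
  apply: (leq_ltn_trans (subset_leq_card suppg)).
  by rewrite (cardsD1 vm S) vmS.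
have IHg := IH g (leq_trans (ltnSn _) (leq_trans cardg Hm)) g0
  (leq_trans (leq_mul (leqnn 2) (ltnW cardg)) Hn).
have sumf : \sum_v f v = \sum_v g v + t *+ #|S|.
  rewrite -sumr_const (big_mkcond (fun v => v \in S)) -big_split /=.
  apply: eq_bigr => v _; rewrite /g fS; case: ifP => fv; first by rewrite subrK.
  rewrite add0r; apply/eqP; rewrite eq_le f0 andbT leNgt fv //.
have pw : forall u v, `|g u - g v| + t * ((u \in S) && (v \notin S))%:R
   + t * ((v \in S) && (u \notin S))%:R <= `|f u - f v|.
  move=> u v; rewrite /g !fS.
  have fu := f0 u; have fv := f0 v.
  have tu : 0 < f u -> t <= f u by move=> H; apply: vmmin; rewrite fS.
  have tv : 0 < f v -> t <= f v by move=> H; apply: vmmin; rewrite fS.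
  case: (boolP (0 < f u)) => Hu; case: (boolP (0 < f v)) => Hv /=.
  - by rewrite !mulr0 !addr0 opprB addrA subrK.
  - have -> : f v = 0 by apply/eqP; rewrite eq_le f0 andbT leNgt.
    rewrite mulr1 mulr0 addr0 !subr0 !ger0_norm ?subr_ge0 ?tu //.
    by rewrite subrK.
  - have -> : f u = 0 by apply/eqP; rewrite eq_le f0 andbT leNgt.
    rewrite mulr1 mulr0 addr0 !sub0r !normrN !ger0_norm ?subr_ge0 ?tv //.
    by rewrite subrK.
  - have -> : f u = 0 by apply/eqP; rewrite eq_le f0 andbT leNgt.
    have -> : f v = 0 by apply/eqP; rewrite eq_le f0 andbT leNgt.
    by rewrite !mulr0 !addr0 subrr normr0.
have sumpw : \sum_(p | e p.1 p.2) `|g p.1 - g p.2| + t * (boundary_size e S)%:R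
   + t * (boundary_size e S)%:R <= \sum_(p | e p.1 p.2) `|f p.1 - f p.2|.
  have E1 : \sum_(p | e p.1 p.2) t * ((p.1 \in S) && (p.2 \notin S))%:R = t * (boundary_size e S)%:R.
    by rewrite -mulr_sumr sum_edge_card.
  have E2 : \sum_(p | e p.1 p.2) t * ((p.2 \in S) && (p.1 \notin S))%:R = t * (boundary_size e S)%:R.
    by rewrite (sum_edge_swap R T e esym) /= -mulr_sumr sum_edge_card.
  rewrite -{1}E1 -E2 -!big_split /=.
  by apply: ler_sum => p _; apply: pw.
have cut := Hcut S Hn.
rewrite sumf mulrDr; apply: le_trans sumpw.
rewrite -addrA lerD //.
rewrite natrM in cut.
have c2 : t * (h * (k%:R * #|S|%:R)) <= t * (boundary_size e S)%:R by rewrite ler_pM2l.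
have -> : 2 * h * k%:R * (t *+ #|S|) = 2 * (t * (h * (k%:R * #|S|%:R))) by rewrite -mulr_natr; ring.
lra.
Qed.
End Co.


Lemma cs_sum (R : realType) (T : finType) (A : {set T}) (a : T -> R) :
  (\sum_(v in A) a v) ^+ 2 <= (#|A|)%:R * \sum_(v in A) a v ^+ 2.
Proof.
set s := \sum_(v in A) a v; set m : R := (#|A|)%:R.
have H : 0 <= \sum_(v in A) (m * a v - s) ^+ 2 by apply: sumr_ge0 => v _; apply: sqr_ge0.
have E : \sum_(v in A) (m * a v - s) ^+ 2 =
   m * (m * \sum_(v in A) a v ^+ 2 - s ^+ 2).
  rewrite (eq_bigr (fun v => m ^+ 2 * a v ^+ 2 - (2 * m * s) * a v + s ^+ 2)); last first.
    by move=> v _; ring.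
  rewrite !big_split /= sumrN -!mulr_sumr sumr_const -/s -/m -/s.
  rewrite -mulr_natr -/m; ring.
case: (posnP #|A|) => HA.
  have A0 : A = finset.set0 by apply/eqP; rewrite -cards_eq0 HA.
  by rewrite /s A0 !big_set0 expr0n /= mulr0.
have m0 : 0 < m by rewrite /m ltr0n.
rewrite E in H; rewrite -subr_ge0; by rewrite pmulr_rge0 in H.
Qed.

Lemma sqpos_neg (R : realType) (a b g : R) : `|a - b| <= g ->
  `|Num.max a 0 ^+ 2 - Num.max b 0 ^+ 2| + `|Num.max (- a) 0 ^+ 2 - Num.max (- b) 0 ^+ 2|
  <= g * (`|a| + `|b|).
Proof.
rewrite ler_norml => /andP[g1 g2].
case: (lerP 0 a) => ha; case: (lerP 0 b) => hb.
- rewrite (ger0_norm ha) (ger0_norm hb).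
  rewrite (max_r (_ : - a <= 0)) ?oppr_le0 // (max_r (_ : - b <= 0)) ?oppr_le0 //.
  rewrite expr0n /= subrr normr0 addr0.
  have : `|a ^+ 2 - b ^+ 2| <= g * (a + b) by rewrite ler_norml; apply/andP; split; nra.
  done.
- rewrite (ger0_norm ha) (ltr0_norm hb).
  rewrite (max_r (_ : - a <= 0)) ?oppr_le0 // (max_l (_ : 0 <= - b)) ?oppr_ge0 ?(ltW hb) //.
  rewrite expr0n /= subr0 sub0r normrN !ger0_norm ?sqr_ge0 //. nra.
- rewrite (ltr0_norm ha) (ger0_norm hb).
  rewrite (max_l (_ : 0 <= - a)) ?oppr_ge0 ?(ltW ha) // (max_r (_ : - b <= 0)) ?oppr_le0 //.
  rewrite expr0n /= subr0 sub0r normrN !ger0_norm ?sqr_ge0 //. nra.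
- rewrite (ltr0_norm ha) (ltr0_norm hb).
  rewrite (max_l (_ : 0 <= - a)) ?oppr_ge0 ?(ltW ha) // (max_l (_ : 0 <= - b)) ?oppr_ge0 ?(ltW hb) //.
  rewrite expr0n /= subrr normr0 add0r.
  have : `|(- a) ^+ 2 - (- b) ^+ 2| <= g * (- a + - b) by rewrite ler_norml; apply/andP; split; nra.
  done.
Qed.

Lemma sq_split (R : realType) (a : R) : Num.max a 0 ^+ 2 + Num.max (- a) 0 ^+ 2 = a ^+ 2.
Proof.
case: (lerP 0 a) => ha.
  rewrite (max_r (_ : - a <= 0)) ?oppr_le0 // expr0n addr0 //.
rewrite (max_l (_ : 0 <= - a)) ?oppr_ge0 ?(ltW ha) // expr0n add0r sqrrN //.
Qed.


Definition upset (R : realType) (T : finType) (x : T -> R) (w : T) : {set T} :=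
  [set v | x w < x v].
Definition loset (R : realType) (T : finType) (x : T -> R) (w : T) : {set T} :=
  [set v | x v < x w].

Arguments upset {R T}. Arguments loset {R T}.
Lemma median (R : realType) (T : finType) (x : T -> R) (v1 : T) :
  exists w, (2 * #|upset x w| <= #|T|)%N /\ (2 * #|loset x w| <= #|T|)%N.
Proof.
case: (@arg_minP _ _ T v1 xpredT x isT) => vmin _ Hmin.
have Pmin : (2 * #|loset x vmin| <= #|T|)%N.
  suff -> : loset x vmin = finset.set0 by rewrite cards0.
  apply/setP => v; rewrite !inE; apply/negbTE; rewrite -leNgt; exact: Hmin.
case: (@arg_maxP _ _ T vmin (fun i => 2 * #|loset x i| <= #|T|)%N x Pmin) => w Pw Hw.
exists w; split => //.
case: (leqP (2 * #|upset x w|) #|T|) => // big.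
have : (0 < #|upset x w|)%N by lia.
case/card_gt0P => u0 u0in.
case: (@arg_minP _ _ T u0 (mem (upset x w)) x u0in) => v' v'in Hv'.
have {}v'in : v' \in upset x w by [].
have {}Hv' : forall j, j \in upset x w -> x v' <= x j by [].
have sub : loset x v' \subset ~: upset x w.
  apply/fintype.subsetP => j; rewrite !inE => lt; apply/negP => jin.
  have := Hv' j; rewrite inE => /(_ jin); by rewrite leNgt lt.
have c1 := subset_leq_card sub.
have Pv' : (2 * #|loset x v'| <= #|T|)%N.
  have := cardsC (upset x w). lia.
have := Hw v' Pv'. move: v'in; rewrite inE => lt le.
by move: (lt_le_trans lt le); rewrite ltxx.
Qed.


Section Main.
Variables (R : realType) (T : finType) (e : rel T) (k : nat) (h : R).
Hypothesis esym : symmetric e.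
Hypothesis Hreg : regular e k.
Hypothesis k0 : (0 < k)%N.
Hypothesis n2 : (2 <= #|T|)%N.
Hypothesis h0 : 0 <= h.
Hypothesis Hcut : forall S : {set T}, (2 * #|S| <= #|T|)%N ->
  h * (k * #|S|)%:R <= (boundary_size e S)%:R.

Lemma sum_drop (w : T) (F : T -> R) : \sum_v F v = F w + \sum_(v in [set~ w]) F v.
Proof.
rewrite (bigD1 w) //=; congr (_ + _); apply: eq_bigl => v; by rewrite in_setC1.
Qed.

Lemma main_x (x : T -> R) : feasible x ->
  h ^+ 2 * (#|T|)%:R <= ((#|T|)%:R - 1) ^+ 2 * (gamma_x e x) ^+ 2.
Proof.
move=> [sx0 snorm].
have : (0 < #|T|)%N by lia.
case/card_gt0P => v1 _.
set N : R := (#|T|)%:R.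
have N2 : 2 <= N by rewrite /N (ler_nat R 2).
have cardw : forall w : T, (#|[set~ w]|)%:R = N - 1.
  move=> w; rewrite cardsC1 /N -(prednK (_ : (0 < #|T|)%N)) ?natrS; last by lia.
  ring.
set g := gamma_x e x.
have gedge : forall u v, e u v -> `|x u - x v| <= g.
  move=> u v euv; rewrite /g /gamma_x.
  exact: (@le_bigmax_cond _ _ _ 0 (u, v) (fun p : T * T => e p.1 p.2) (fun p : T * T => `|x p.1 - x p.2|) euv).

have g0 : 0 <= g.
  rewrite /g /gamma_x; elim/big_ind: _ => //.
  by move=> a b a0 b0; rewrite le_max a0.
have [v0 xv0] : exists v0, `|x v0| = 1.
  move: snorm; rewrite /sup_norm (bigmax_eq_arg 0 v1 xpredT (fun i => `|x i|)) // => H.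
  by eexists; exact: H.
have sx2 : N <= (N - 1) * \sum_v x v ^+ 2.
  have xv02 : x v0 ^+ 2 = 1 by rewrite -real_normK ?num_real // xv0 expr1n.
  have s1 : \sum_(v in [set~ v0]) x v = - x v0.
    by apply/eqP; rewrite -addr_eq0 addrC -sum_drop sx0.
  have := cs_sum R T [set~ v0] x; rewrite s1 sqrrN xv02 cardw => cs.
  rewrite (sum_drop v0) xv02; lra.
have [w [Hup Hlo]] := median R T x v1.
pose z v := x v - x w.
have sz2 : \sum_v x v ^+ 2 <= \sum_v z v ^+ 2.
  have -> : \sum_v z v ^+ 2 = \sum_v x v ^+ 2 - 2 * x w * \sum_v x v + N * x w ^+ 2.
    rewrite /z (eq_bigr (fun v => x v ^+ 2 - (2 * x w) * x v + x w ^+ 2)); last by move=> v _; ring.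
    rewrite !big_split /= sumrN -mulr_sumr sumr_const /N -mulr_natl; ring.
  rewrite sx0 mulr0 subr0 lerDl; apply: mulr_ge0; [exact: ler0n | exact: sqr_ge0].
have zw : z w = 0 by rewrite /z subrr.
have cs2 : (\sum_v `|z v|) ^+ 2 <= (N - 1) * \sum_v z v ^+ 2.
  rewrite (sum_drop w) (sum_drop w (fun v => z v ^+ 2)) zw normr0 expr0n !add0r /=.
  have E : \sum_(v in [set~ w]) `|z v| ^+ 2 = \sum_(v in [set~ w]) z v ^+ 2.
    by apply: eq_bigr => v _; rewrite real_normK ?num_real.
  by rewrite -E -(cardw w); apply: cs_sum.
pose fp v := Num.max (z v) 0 ^+ 2.
pose fm v := Num.max (- z v) 0 ^+ 2.
have fp0 : forall v, 0 <= fp v by move=> v; exact: sqr_ge0.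
have fm0 : forall v, 0 <= fm v by move=> v; exact: sqr_ge0.
have suppp : supp R T fp \subset upset x w.
  apply/fintype.subsetP => v; rewrite /supp !inE /fp /z.
  case: (lerP 0 (x v - x w)) => hz; last by rewrite expr0n /= ltxx.
  move=> H; rewrite -subr_gt0 lt_def hz andbT; apply/negP => /eqP e0.
  by move: H; rewrite e0 expr0n /= ltxx.
have suppm : supp R T fm \subset loset x w.
  apply/fintype.subsetP => v; rewrite /supp !inE /fm /z.
  case: (lerP 0 (- (x v - x w))) => hz; last by rewrite expr0n /= ltxx.
  move=> H; rewrite -subr_lt0 -oppr_gt0 lt_def hz andbT; apply/negP => /eqP e0.
  by move: H; rewrite e0 expr0n /= ltxx.
have cp := coarea R T e k h esym Hcut _ fp (leqnn _) fp0
  (leq_trans (leq_mul (leqnn 2) (subset_leq_card suppp)) Hup).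
have cm := coarea R T e k h esym Hcut _ fm (leqnn _) fm0
  (leq_trans (leq_mul (leqnn 2) (subset_leq_card suppm)) Hlo).
have ssum : \sum_v fp v + \sum_v fm v = \sum_v z v ^+ 2.
  by rewrite -big_split; apply: eq_bigr => v _; exact: sq_split.
have edge : \sum_(p | e p.1 p.2) `|fp p.1 - fp p.2| + \sum_(p | e p.1 p.2) `|fm p.1 - fm p.2|
   <= \sum_(p | e p.1 p.2) g * (`|z p.1| + `|z p.2|).
  rewrite -big_split; apply: ler_sum => p ep; rewrite /fp /fm; apply: sqpos_neg.
  have -> : z p.1 - z p.2 = x p.1 - x p.2 by rewrite /z; ring.
  exact: gedge.
have degsum : \sum_(p | e p.1 p.2) g * (`|z p.1| + `|z p.2|) = g * (2 * k%:R * \sum_v `|z v|).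
  rewrite -mulr_sumr big_split /= (sum_edge_swap R T e esym (fun p => `|z p.2|)) /=.
  rewrite !(sum_edge_fst R T e (fun v => `|z v|)) -big_split /=; congr (_ * _); rewrite mulr_sumr; apply: eq_bigr => v _.
  rewrite Hreg; ring.
set S1 := \sum_v `|z v|.
set S2 := \sum_v z v ^+ 2.
have kpos : 0 < k%:R :> R by rewrite ltr0n.
have H1 : h * S2 <= g * S1.
  have : 2 * k%:R * (h * S2) <= 2 * k%:R * (g * S1).
    rewrite /S2 -ssum. have := lerD cp cm. move=> A.
    have := le_trans A edge. rewrite degsum -/S1 => B. 
    have -> : 2 * k%:R * (h * (\sum_v fp v + \sum_v fm v)) = 2 * h * k%:R * \sum_v fp v + 2 * h * k%:R * \sum_v fm v by ring.
    have -> : 2 * k%:R * (g * S1) = g * (2 * k%:R * S1) by ring.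
    exact: B.
  rewrite ler_pM2l //; apply: mulr_gt0 => //; exact: ltr0n.
have S1p : 0 <= S1 by apply: sumr_ge0 => v _.
have sx2p : 0 < \sum_v x v ^+ 2.
  rewrite ltNge; apply/negP => H.
  have := ler_wpM2l (_ : 0 <= N - 1) H; rewrite mulr0 => H2. have : 0 <= N - 1 by lra. move/H2. lra.
have sz2' : \sum_v x v ^+ 2 <= S2 by exact: sz2.
have cs2' : S1 ^+ 2 <= (N - 1) * S2 by exact: cs2.
have S2p : 0 < S2 by lra.
have A1 : h ^+ 2 * S2 ^+ 2 <= g ^+ 2 * ((N - 1) * S2).
  have hS : 0 <= h * S2 by apply: mulr_ge0 => //; exact: ltW.
  have gS : 0 <= g * S1 by apply: mulr_ge0.
  have Q : (h * S2) ^+ 2 <= (g * S1) ^+ 2 by rewrite ler_sqr ?nnegrE.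
  have Q2 := ler_wpM2l (sqr_ge0 g) cs2'.
  rewrite !exprMn in Q. lra.
have A2 : h ^+ 2 * S2 <= g ^+ 2 * (N - 1).
  have : S2 * (h ^+ 2 * S2) <= S2 * (g ^+ 2 * (N - 1)).
    have -> : S2 * (h ^+ 2 * S2) = h ^+ 2 * S2 ^+ 2 by ring.
    have -> : S2 * (g ^+ 2 * (N - 1)) = g ^+ 2 * ((N - 1) * S2) by ring.
    exact: A1.
  by rewrite ler_pM2l.
have Q3 := ler_wpM2l (_ : 0 <= h ^+ 2) sz2'.
have Q4 := ler_wpM2l (_ : 0 <= h ^+ 2) sx2.
have Q5 := ler_wpM2l (_ : 0 <= N - 1) A2.
have hh : 0 <= h ^+ 2 by exact: sqr_ge0.
have N1 : 0 <= N - 1 by lra.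
have Q6 := ler_wpM2l N1 (ler_wpM2l hh sz2').
have E7 : (N - 1) ^+ 2 * g ^+ 2 = (N - 1) * (g ^+ 2 * (N - 1)) by ring.
have E8 : (N - 1) * (h ^+ 2 * S2) = h ^+ 2 * ((N - 1) * S2) by ring.
rewrite E7; apply: le_trans (Q5 N1).
rewrite E8 mulrC.
apply: le_trans (_ : N * h ^+ 2 <= ((N - 1) * \sum_v x v ^+ 2) * h ^+ 2) _.
  by rewrite ler_wpM2r.
rewrite mulrC ler_wpM2l // ler_wpM2l //.
Qed.

End Main.


Lemma cross (T : finType) (e : rel T) (S : {set T}) a b :
  a \in S -> b \notin S -> connect e a b -> (0 < boundary_size e S)%N.
Proof.
move=> aS bS /connectP [p pth bE]; subst b.
elim: p a aS pth bS => [|y p IH] a aS /= pth bS; first by rewrite aS in bS.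
move/andP: pth => [eay pth].
case: (boolP (y \in S)) => yS; first exact: IH yS pth bS.
apply/card_gt0P; exists (a, y); by rewrite inE /= eay aS yS.
Qed.

Lemma vol_reg (T : finType) (e : rel T) k (S : {set T}) :
  regular e k -> vol e S = (k * #|S|)%N.
Proof.
move=> Hreg; rewrite /vol (eq_bigr (fun _ => k)); last by move=> u _; exact: Hreg.
by rewrite sum_nat_const mulnC.
Qed.

Theorem theorem4p6 (R : realType) (T : finType) (e : rel T) (k : nat) :
  simple_graph e -> connected_graph e -> regular e k -> (2 <= #|T|)%N ->
  cheeger R e < Num.sqrt ((#|T| - 1)%:R) * gamma R e.
Proof.
move=> [esym eirr] conn Hreg n2.
have : (0 < #|T|)%N by lia.
case/card_gt0P => a _.
have [b ab] : exists b, b != a.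
  have : (0 < #|[set~ a]|)%N by rewrite cardsC1; lia.
  by case/card_gt0P => b; rewrite in_setC1 => ?; exists b.
have k0 : (0 < k)%N.
  have := @cross T e [set a] a b; rewrite !inE eqxx (negbTE ab) => /(_ isT isT (conn a b)).
  case/card_gt0P => -[u v]; rewrite !inE /= => /and3P[euv /eqP ua _]; subst u.
  rewrite -(Hreg a) /deg; apply/card_gt0P; exists v; by rewrite inE.
set N : R := (#|T|)%:R.
have N2 : 2 <= N by rewrite /N (ler_nat R 2).
set h := cheeger R e.
set HS := [set hS R e S | S in [set S : {set T} | S != finset.set0 /\ S != finset.setT]]%classic.
have hSge0 : forall S, 0 <= hS R e S by move=> S; rewrite /hS; apply: divr_ge0; exact: ler0n.
have HSlb : has_lbound HS.
  by exists 0 => y [S _ <-]; exact: hSge0.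
have HSne : nonempty HS.
  exists (hS R e [set a]); exists [set a] => //; split.
    by apply/eqP/setP => /(_ a); rewrite !inE eqxx.
  by apply/eqP/setP => /(_ b); rewrite !inE (negbTE ab).
have Hcut : forall S : {set T}, (2 * #|S| <= #|T|)%N ->
    h * (k * #|S|)%:R <= (boundary_size e S)%:R.
  move=> S HS2.
  case: (set_0Vmem S) => [S0|[s sS]].
    by rewrite S0 cards0 muln0 mulr0.
  have SnT : S != finset.setT.
    apply/eqP => ST; move: HS2; rewrite ST cardsT; lia.
  have Sn0 : S != finset.set0 by apply/eqP => S0; rewrite S0 inE in sS.
  have hle : h <= hS R e S by apply: (ge_inf HSlb); exists S.
  have cS : (0 < #|S|)%N by apply/card_gt0P; exists s.
  have mn : minn (vol e S) (vol e (~: S)) = (k * #|S|)%N.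
    rewrite !(vol_reg T e k _ Hreg); apply/minn_idPl.
    rewrite leq_mul2l; apply/orP; right. have := cardsC S. lia.
  move: hle; rewrite /hS mn => hle.
  have kS : 0 < (k * #|S|)%:R :> R by rewrite ltr0n muln_gt0 k0 cS.
  by rewrite -ler_pdivlMr.
have h0 : 0 <= h by apply: lb_le_inf => // y [S _ <-]; exact: hSge0.
have hpos : 0 < h.
  apply: (@lt_le_trans _ _ (1 / ((k * #|T|)%:R))).
    by rewrite divr_gt0 // ltr0n muln_gt0 k0; lia.
  apply: lb_le_inf => // y [S [Sn0 SnT] <-].
  have [s sS] : exists s, s \in S.
    case: (set_0Vmem S) => [S0|[s sS]]; [by rewrite S0 eqxx in Sn0 | by exists s].
  have [t tS] : exists t, t \notin S.
    case: (boolP [exists t, t \notin S]) => [/existsP[t ?]|]; first by exists t.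
    rewrite negb_exists => /forallP Hf; move/negP: SnT; case.
    by apply/eqP/setP => v; rewrite inE; have := Hf v; rewrite negbK.
  have bpos := cross T e S s t sS tS (conn s t).
  have cS : (0 < #|S|)%N by apply/card_gt0P; exists s.
  have cC : (0 < #|~: S|)%N by apply/card_gt0P; exists t; rewrite inE.
  rewrite /hS !(vol_reg T e k _ Hreg).
  set m := minn _ _.
  have m0 : (0 < m)%N by rewrite /m; have := cardsC S; lia.
  have mle : (m <= k * #|T|)%N by rewrite /m; have := cardsC S; nia.
  rewrite ler_pdivlMr ?ltr0n // mulrAC ler_pdivrMr ?ltr0n ?muln_gt0 ?k0; last by lia.
  rewrite mul1r -natrM ler_nat; nia.
pose x0 : T -> R := fun v => if v == a then 1 else if v == b then -1 else 0.
have fx0 : feasible x0.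
  split.
    rewrite (bigD1 a) //= (bigD1 b) // big1 /=.
      by rewrite /x0 eqxx (negbTE ab) eqxx addr0 subrr.
    by move=> v /andP[va vb]; rewrite /x0 (negbTE va) (negbTE vb).
  rewrite /sup_norm; apply/eqP; rewrite eq_le; apply/andP; split.
    apply: bigmax_le => // v _; rewrite /x0; case: (v == a); first by rewrite normr1.
    case: (v == b); by rewrite ?normrN ?normr1 ?normr0.
  by apply: (@bigmax_sup _ _ _ 0 a xpredT) => //; rewrite /x0 eqxx normr1.
have gx0 : forall x : T -> R, 0 <= gamma_x e x.
  move=> x; rewrite /gamma_x; elim/big_ind: _ => //.
  by move=> u v u0 v0; rewrite le_max u0.
have N1 : 0 < N - 1 by lra.
set c := h * Num.sqrt N / (N - 1).
have clb : forall x : T -> R, feasible x -> c <= gamma_x e x.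
  move=> x fx; have M := main_x R T e k h esym Hreg k0 n2 h0 Hcut x fx.
  have : h * Num.sqrt N <= (N - 1) * gamma_x e x.
    rewrite -ler_sqr ?nnegrE.
    - rewrite !exprMn sqr_sqrtr; last by lra.
      exact: M.
    - by apply: mulr_ge0 => //; exact: sqrtr_ge0.
    - by apply: mulr_ge0; [exact: ltW | exact: gx0].
  by move=> H; rewrite /c ler_pdivrMr // [X in _ <= X]mulrC.
have gge : c <= gamma R e.
  apply: lb_le_inf; first by exists (gamma_x e x0); exists x0.
  by move=> y [x fx <-]; exact: clb.
set s := Num.sqrt (#|T| - 1)%:R.
have sE : s = Num.sqrt (N - 1).
  by rewrite /s /N natrB; last by lia.
have s0 : 0 < s by rewrite sE sqrtr_gt0.
have ss : s ^+ 2 = N - 1 by rewrite sE sqr_sqrtr //; exact: ltW.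
have rs : s < Num.sqrt N by rewrite sE ltr_sqrt; [lra | lra].
apply: (@lt_le_trans _ _ (s * c)); last by rewrite ler_wpM2l //; exact: ltW.
have -> : s * c = h * Num.sqrt N / s.
  rewrite /c -ss; field; exact: lt0r_neq0.
by rewrite ltr_pdivlMr // ltr_pM2l.
Qed.
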